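(* Let $\rho=(R,V,\beta,\Phi)$ be a form ring such that at least one code of Type $\rho$ exists. Then $$\gcd\{N\ge1:\exists\ C\le V^N \text{ of Type }\rho\}=\min\{N\ge1:\exists\ C\le V^N\text{ of Type }\rho\}.$$
   Context: Let $R$ be a finite ring with $1$ and $V$ a finite left $R$-module. $\mathrm{Bil}(V,\mathbb Q/\mathbb Z)$ denotes the group of $\mathbb Z$-bilinear maps $V\times V\to\mathbb Q/\mathbb Z$; for $\beta$ in it and $r\in R$ write $\beta_r(v,w):=\beta(v,rw)$ and $\beta^\tau(v,w):=\beta(w,v)$. $\beta$ is nonsingular if $v\mapsto\beta(v,\cdot)$ is an isomorphism $V\to\mathrm{Hom}(V,\mathbb Q/\mathbb Z)$. $\mathrm{Quad}_0(V,\mathbb Q/\mathbb Z)$ is the group of maps $\phi:V\to\mathbb Q/\mathbb Z$ with $\phi(0)=0$ and $\phi(x+y+z)-\phi(x+y)-\phi(x+z)-\phi(y+z)+\phi(x)+\phi(y)+\phi(z)=0$ for all $x,y,z\in V$. For $r\in R$ put $(\phi[r])(v):=\phi(rv)$; a sub-$R$-qmodule of $\mathrm{Quad}_0(V,\mathbb Q/\mathbb Z)$ is a subgroup closed under all maps $\phi\mapsto\phi[r]$. Define $\{\!\{\beta\}\!\}(v):=\beta(v,v)$ and $\lambda(\phi)(v,w):=\phi(v+w)-\phi(v)-\phi(w)$. $\beta$ is admissible if it is nonsingular, $M:=\{\beta_r:r\in R\}$ is closed under $\tau$, and $r\mapsto\beta_r$ is a bijection $R\to M$. A form ring is a quadruple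 $\rho=(R,V,\beta,\Phi)$ with $\beta$ admissible and $\Phi$ a sub-$R$-qmodule of $\mathrm{Quad}_0(V,\mathbb Q/\mathbb Z)$ such that $\{\!\{m\}\!\}\in\Phi$ for all $m\in M$ and $\lambda(\Phi)\subseteq M$. A code of length $N$ is a left $R$-submodule $C\le V^N$; $C^\perp=\{x\in V^N:\sum_i\beta(x_i,c_i)=0\ \forall c\in C\}$; $C$ is self-dual if $C=C^\perp$, isotropic if $\sum_i\phi(c_i)=0$ for all $c\in C,\phi\in\Phi$; a code of Type $\rho$ is a self-dual isotropic code. *)

(* Defs.v *)
From HB Require Import structures.
From mathcomp Require Import all_boot all_order all_algebra.
From mathcomp Require Import ring lra.
Set Implicit Arguments. Unset Strict Implicit. Unset Printing Implicit Defensive.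
Import Order.TTheory GRing.Theory Num.Theory.
Local Open Scope ring_scope.

(* The group Q/Z, realised as the rationals in [0,1) with addition    *)
(* modulo 1.                                                           *)

Definition fracq (x : rat) : rat := x - (Num.floor x)%:~R.

Lemma fracq_range x : 0 <= fracq x < 1.
Proof.
have /andP[h1 h2] := floor_itv x.
rewrite intrD in h2; rewrite /fracq; apply/andP; split; lra.
Qed.

Lemma fracq_uniq x y (n : int) : 0 <= y < 1 -> x = y + n%:~R -> fracq x = y.
Proof.
move=> /andP[y0 y1] ->; rewrite /fracq.
suff -> : Num.floor (y + n%:~R) = n by rewrite addrK.
apply: floor_def; rewrite intrD; apply/andP; split; lra.
Qed.

Lemma fracq_id x : 0 <= x < 1 -> fracq x = x.
Proof. by move=> h; apply: (@fracq_uniq _ _ 0) => //; rewrite addr0. Qed.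

Lemma fracqK x : fracq (fracq x) = fracq x.
Proof. exact/fracq_id/fracq_range. Qed.

Lemma fracqDl x y : fracq (fracq x + y) = fracq (x + y).
Proof.
apply: (@fracq_uniq _ _ (Num.floor (x + y) - Num.floor x)); first exact: fracq_range.
rewrite /fracq intrB; ring.
Qed.

Lemma fracqDr x y : fracq (x + fracq y) = fracq (x + y).
Proof. by rewrite addrC fracqDl addrC. Qed.

Record qz := QZ { qzval : rat; qzP : fracq qzval == qzval }.

HB.instance Definition _ := [isSub for qzval].
HB.instance Definition _ := [Equality of qz by <:].
HB.instance Definition _ := [Choice of qz by <:].

Definition mkqz (x : rat) : qz := QZ (introT eqP (fracqK x)).

Definition qz0 : qz := mkqz 0.
Definition qzopp (a : qz) : qz := mkqz (- qzval a).
Definition qzadd (a b : qz) : qz := mkqz (qzval a + qzval b).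

Lemma qzvalK (a : qz) : fracq (qzval a) = qzval a.
Proof. exact/eqP/qzP. Qed.

Lemma qz_eq (a b : qz) : qzval a = qzval b -> a = b.
Proof. exact: val_inj. Qed.

Lemma qzaddA : associative qzadd.
Proof.
move=> a b c; apply: qz_eq => /=.
by rewrite fracqDr fracqDl addrA.
Qed.

Lemma qzaddC : commutative qzadd.
Proof. by move=> a b; apply: qz_eq => /=; rewrite addrC. Qed.

Lemma qzadd0 : left_id qz0 qzadd.
Proof.
move=> a; apply: qz_eq => /=.
by rewrite (@fracq_id 0) ?lexx ?ltr01 // add0r qzvalK.
Qed.

Lemma qzaddN : left_inverse qz0 qzopp qzadd.
Proof.
move=> a; apply: qz_eq => /=.
by rewrite fracqDl addNr.
Qed.

HB.instance Definition _ := GRing.isZmodule.Build qz qzaddA qzaddC qzadd0 qzaddN.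

Section FormRing.
Variables (R : finNzRingType) (V : finLmodType R).

Definition biadditive (b : V -> V -> qz) : Prop :=
  (forall v v' w, b (v + v') w = b v w + b v' w) /\
  (forall v w w', b v (w + w') = b v w + b v w').

Definition additive_qz (f : V -> qz) : Prop :=
  forall v w, f (v + w) = f v + f w.

Definition bil_r (b : V -> V -> qz) (r : R) : V -> V -> qz :=
  fun v w => b v (r *: w).
Definition bil_tau (b : V -> V -> qz) : V -> V -> qz := fun v w => b w v.

Definition nonsingular (b : V -> V -> qz) : Prop :=
  (forall v v', (forall w, b v w = b v' w) -> v = v') /\
  (forall f : V -> qz, additive_qz f -> exists v, forall w, f w = b v w).

Definition admissible (b : V -> V -> qz) : Prop :=
  [/\ biadditive b, nonsingular b,
      (forall r : R, exists s : R, forall v w, bil_tau (bil_r b r) v w = bil_r b s v w) &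
      (* r |-> beta_r is injective (hence a bijection R -> M) *)
      (forall r s : R, (forall v w, bil_r b r v w = bil_r b s v w) -> r = s)].

Definition quad0 (phi : V -> qz) : Prop :=
  phi 0 = 0 /\
  forall x y z : V,
    phi (x + y + z) - phi (x + y) - phi (x + z) - phi (y + z)
      + phi x + phi y + phi z = 0.

Definition qshift (phi : {ffun V -> qz}) (r : R) : {ffun V -> qz} :=
  [ffun v => phi (r *: v)].

Definition qdiag (b : V -> V -> qz) : {ffun V -> qz} := [ffun v => b v v].

Definition qlambda (phi : {ffun V -> qz}) : V -> V -> qz :=
  fun v w => phi (v + w) - phi v - phi w.

Definition sub_qmodule (Phi : {ffun V -> qz} -> Prop) : Prop :=
  [/\ (forall phi, Phi phi -> quad0 phi),
      Phi 0,
      (forall phi psi, Phi phi -> Phi psi -> Phi (phi - psi)) &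
      (forall phi r, Phi phi -> Phi (qshift phi r))].

Definition form_ring (b : V -> V -> qz) (Phi : {ffun V -> qz} -> Prop) : Prop :=
  [/\ admissible b, sub_qmodule Phi,
      (forall r : R, Phi (qdiag (bil_r b r))) &
      (forall phi, Phi phi -> exists r : R, forall v w, qlambda phi v w = bil_r b r v w)].

Definition is_code (N : nat) (C : {set {ffun 'I_N -> V}}) : Prop :=
  0 \in C /\ forall (r : R) x y, x \in C -> y \in C -> r *: x + y \in C.

Definition self_dual (b : V -> V -> qz) (N : nat) (C : {set {ffun 'I_N -> V}}) : Prop :=
  forall x : {ffun 'I_N -> V},
    x \in C <-> (forall c, c \in C -> \sum_(i < N) b (x i) (c i) = 0).

Definition isotropic (Phi : {ffun V -> qz} -> Prop) (N : nat)
    (C : {set {ffun 'I_N -> V}}) : Prop :=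
  forall c, c \in C -> forall phi, Phi phi -> \sum_(i < N) phi (c i) = 0.

Definition code_of_type (b : V -> V -> qz) (Phi : {ffun V -> qz} -> Prop)
    (N : nat) (C : {set {ffun 'I_N -> V}}) : Prop :=
  [/\ is_code C, self_dual b C & isotropic Phi C].

Definition type_length (b : V -> V -> qz) (Phi : {ffun V -> qz} -> Prop) (N : nat) : Prop :=
  (0 < N)%N /\ exists C : {set {ffun 'I_N -> V}}, code_of_type b Phi C.

End FormRing.

Definition is_min_of (S : nat -> Prop) (n : nat) : Prop :=
  S n /\ forall m, S m -> (n <= m)%N.

Definition is_gcd_of (S : nat -> Prop) (d : nat) : Prop :=
  (forall m, S m -> (d %| m)%N) /\
  (forall e, (forall m, S m -> (e %| m)%N) -> (e %| d)%N).

(* Main.v *)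
Require Import Defs.
From HB Require Import structures.
From mathcomp Require Import all_boot all_order all_algebra.
From mathcomp Require Import ring lra zify.
From Stdlib Require Import Classical.
Import Order.TTheory GRing.Theory Num.Theory.
Local Open Scope ring_scope.

Notation frq := Defs.fracq.

Lemma mkqz_add x y : mkqz x + mkqz y = mkqz (x + y).
Proof. by apply: qz_eq => /=; rewrite fracqDl fracqDr. Qed.

Lemma mkqz_muln x n : mkqz x *+ n = mkqz (x *+ n).
Proof.
elim: n => [|n IH]; first by [].
by rewrite mulrS IH mkqz_add -mulrS.
Qed.

Lemma mkqz_val (c : qz) : mkqz (qzval c) = c.
Proof. by apply: qz_eq => /=; rewrite qzvalK. Qed.

Lemma qz_div (c : qz) (n : nat) : (0 < n)%N -> exists t : qz, t *+ n = c.
Proof.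
move=> n0; exists (mkqz (qzval c / n%:R)).
have nz : (n%:R : rat) != 0 by rewrite pnatr_eq0 -lt0n.
rewrite mkqz_muln.
have -> : qzval c / n%:R *+ n = qzval c by rewrite -[LHS]mulr_natr; field.
exact: mkqz_val.
Qed.

Lemma qz_inv (n : nat) : (1 < n)%N -> exists t : qz, t *+ n = 0 /\ t != 0.
Proof.
move=> n1; exists (mkqz (n%:R^-1)); split.
  have nz : (n%:R : rat) != 0 by rewrite pnatr_eq0 -lt0n (ltnW n1).
  rewrite mkqz_muln.
  have -> : (n%:R : rat)^-1 *+ n = 1 by rewrite -[LHS]mulr_natr; field.
  apply: qz_eq => /=.
  rewrite (@fracq_uniq 1 0 1) ?lexx ?ltr01 ?add0r //.
apply/eqP => /(congr1 qzval) /=.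
have h : 0 < (n%:R : rat)^-1 < 1.
  rewrite invr_gt0 ltr0n (ltnW n1) /= invf_lt1 ?ltr0n ?(ltnW n1) //.
  by rewrite ltr1n.
rewrite (fracq_id (x := n%:R^-1)); last by case/andP: h => h1 h2; rewrite ltW.
change (qzval 0) with (frq 0).
rewrite (@fracq_id 0) ?lexx ?ltr01 //.
by move=> e; move: h; rewrite e ltxx.
Qed.

Section Ext.
Variable G : finZmodType.

Definition subgrp (H : {set G}) :=
  0 \in H /\ forall x y, x \in H -> y \in H -> x - y \in H.
Definition addon (H : {set G}) (f : G -> qz) :=
  forall x y, x \in H -> y \in H -> f (x + y) = f x + f y.

Lemma subgrpD H x y : subgrp H -> x \in H -> y \in H -> x + y \in H.
Proof.
move=> [h0 hB] hx hy; have := hB x (0 - y) hx (hB _ _ h0 hy).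
by rewrite sub0r opprK.
Qed.

Lemma subgrpMn H x k : subgrp H -> x \in H -> x *+ k \in H.
Proof.
move=> sH hx; elim: k => [|k IH]; first by case: sH.
by rewrite mulrS subgrpD.
Qed.

Lemma exists_period (g : G) : exists k, (0 < k)%N /\ g *+ k = 0.
Proof.
have : ~~ injectiveb (fun k : 'I_(#|G|.+1) => g *+ k).
  apply/injectiveP => inj; have := leq_card _ inj.
  by rewrite card_ord ltnn.
case/injectivePn => x [y] xy e.
wlog lt : x y xy e / (x < y)%N.
  move=> W; case: (ltngtP x y) => h; first exact: W h.
    by apply: (W y x) => //; rewrite eq_sym.
  by move: xy; rewrite (val_inj h) eqxx.
exists (y - x)%N; split; first by rewrite subn_gt0.
by rewrite mulrnBr ?(ltnW lt) // e subrr.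
Qed.

Section Step.
Variables (H : {set G}) (sH : subgrp H) (f : G -> qz) (af : addon H f)
          (g : G) (gH : g \notin H).

Let P k := (0 < k)%N && (g *+ k \in H).
Let exP : exists k, P k.
Proof.
have [k [k0 e]] := exists_period g; exists k; rewrite /P k0 e.
by case: sH.
Qed.
Let n := ex_minn exP.
Let Pn : P n. Proof. rewrite /n; case: (ex_minnP exP) => m pm _; exact: pm. Qed.
Let nmin k : P k -> (n <= k)%N. Proof. rewrite /n; case: (ex_minnP exP) => m _ h; exact: h. Qed.
Let n0 : (0 < n)%N. Proof. by case/andP: Pn. Qed.
Let gnH : g *+ n \in H. Proof. by case/andP: Pn. Qed.
Let n1 : (1 < n)%N.
Proof.
rewrite ltn_neqAle n0 andbT; apply/eqP => e.
by move: gnH; rewrite -e mulr1n (negPf gH).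
Qed.

Lemma step_uniq x (k1 k2 : nat) : (k1 < n)%N -> (k2 < n)%N ->
  x - g *+ k1 \in H -> x - g *+ k2 \in H -> k1 = k2.
Proof.
wlog lt : k1 k2 / (k1 <= k2)%N.
  move=> W h1 h2 e1 e2; case: (leqP k1 k2) => h; first exact: W.
  by symmetry; apply: W => //; rewrite ltnW.
move=> h1 h2 e1 e2; apply/eqP; rewrite eqn_leq lt /=.
case: sH => _ hB; have := hB _ _ e1 e2.
have -> : x - g *+ k1 - (x - g *+ k2) = g *+ (k2 - k1).
  by rewrite mulrnBr // opprB addrC addrA subrK.
move=> hk; rewrite leqNgt; apply/negP => lt2.
have := @nmin (k2 - k1)%N; rewrite /P subn_gt0 lt2 hk => /(_ isT).
move=> le; have : (k2 - k1 < n)%N by apply: leq_ltn_trans (leq_subr _ _) h2.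
by rewrite ltnNge le.
Qed.

Lemma exists_t_sep : (forall x, x \in H -> f x = 0) ->
  exists t : qz, t *+ n = f (g *+ n) /\ t != 0.
Proof.
move=> f0; have [t [ht tn]] := qz_inv _ n1; exists t; split => //.
by rewrite f0 // ht.
Qed.

Lemma exists_t : exists t : qz, t *+ n = f (g *+ n).
Proof. exact: qz_div. Qed.

Variable t : qz.
Hypothesis ht : t *+ n = f (g *+ n).

Definition H' : {set G} := [set x | [exists k : 'I_n, x - g *+ k \in H]].
Definition f' (x : G) : qz :=
  if [pick k : 'I_n | x - g *+ k \in H] is Some k then f (x - g *+ k) + t *+ k
  else 0.

Lemma f'E x (k : nat) : (k < n)%N -> x - g *+ k \in H -> f' x = f (x - g *+ k) + t *+ k.
Proof.
move=> kn hk; rewrite /f'; case: pickP => [j hj|].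
  by have e := @step_uniq x j k (ltn_ord j) kn hj hk; by rewrite -e.
by move/(_ (Ordinal kn)) => /=; rewrite hk.
Qed.

Lemma H'P x : reflect (exists2 k, (k < n)%N & x - g *+ k \in H) (x \in H').
Proof.
rewrite inE; apply: (iffP existsP) => [[k hk]|[k kn hk]].
  by exists k.
by exists (Ordinal kn).
Qed.

Lemma HsubH' x : x \in H -> x \in H'.
Proof. by move=> hx; apply/H'P; exists 0%N => //; rewrite subr0. Qed.

Lemma f'_agree x : x \in H -> f' x = f x.
Proof. by move=> hx; rewrite (@f'E x 0) ?subr0 ?addr0. Qed.

Lemma gH' : g \in H'.
Proof.
apply/H'P; exists 1%N => //; rewrite subrr; by case: sH.
Qed.

Lemma f'g : f' g = t.
Proof.
rewrite (@f'E g 1) // ?subrr; last by case: sH.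
have -> : f 0 = 0.
  have h0 : (0:G) \in H by case: sH.
  have := @af 0 0 h0 h0; rewrite addr0 => e.
  by have := congr1 (fun z => z - f 0) e; rewrite addrK subrr.
by rewrite add0r mulr1n.
Qed.

Lemma subgrpH' : subgrp H'.
Proof.
split; first exact: HsubH' (proj1 sH).
move=> x y /H'P[k1 k1n h1] /H'P[k2 k2n h2].
case: sH => h0 hB.
case: (leqP k2 k1) => le.
  apply/H'P; exists (k1 - k2)%N; first by apply: leq_ltn_trans (leq_subr _ _) k1n.
  have -> : x - y - g *+ (k1 - k2) = (x - g *+ k1) - (y - g *+ k2).
    rewrite mulrnBr // !opprB addrACA [RHS]addrACA.
    by rewrite [- y + _]addrC.
  exact: hB.
have hk2 : (k2 <= n + k1)%N by rewrite (leq_trans (ltnW k2n)) ?leq_addr.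
apply/H'P; exists (n + k1 - k2)%N.
  by rewrite ltn_subLR // -addnC ltn_add2r //.
have -> : x - y - g *+ (n + k1 - k2) = ((x - g *+ k1) - (y - g *+ k2)) - g *+ n.
  rewrite mulrnBr // mulrnDr.
  set a := g *+ n; set b := g *+ k1; set c := g *+ k2.
  rewrite !opprB !opprD !addrA.
  by rewrite (addrAC _ (-a) (-b)) (addrAC (x - y) c (-b)) (addrAC x (-y) (-b)) (addrAC (x - b) c (-y)).
exact: hB (hB _ _ h1 h2) gnH.
Qed.

Lemma addon_f' : addon H' f'.
Proof.
move=> x y /H'P[k1 k1n h1] /H'P[k2 k2n h2].
rewrite (@f'E x k1 k1n h1) (@f'E y k2 k2n h2).
have s12 : (x - g *+ k1) + (y - g *+ k2) \in H by rewrite subgrpD.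
case: (ltnP (k1 + k2) n) => lt.
  have hk : x + y - g *+ (k1 + k2) = (x - g *+ k1) + (y - g *+ k2).
    by rewrite mulrnDr opprD addrACA.
  have e := @f'E (x + y) (k1 + k2) lt; rewrite hk in e.
  rewrite (e s12) af // mulrnDr.
  by rewrite addrACA.
have lt' : (k1 + k2 - n < n)%N.
  rewrite ltn_subLR //; lia.
have hk : x + y - g *+ (k1 + k2 - n) = ((x - g *+ k1) + (y - g *+ k2)) + g *+ n.
  rewrite mulrnBr // mulrnDr.
  by rewrite opprB opprD [in RHS]addrACA (addrC (g *+ n)) !addrA.
have e := @f'E (x + y) (k1 + k2 - n) lt'; rewrite hk in e.
rewrite (e (@subgrpD _ _ _ sH s12 gnH)) af // af // -ht mulrnBr // mulrnDr.
set A := f _; set B := f _; set a := t *+ k1; set b := t *+ k2; set c := t *+ n.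
by rewrite -addrA [c + _]addrC subrK addrACA.
Qed.

End Step.

Lemma extend_all (H : {set G}) (f : G -> qz) : subgrp H -> addon H f ->
  exists f2 : G -> qz, addon setT f2 /\ forall x, x \in H -> f2 x = f x.
Proof.
move=> sH af; have [k hk] : exists k, (#|~: H| <= k)%N by exists #|~: H|.
elim: k H f sH af hk => [|k IH] H f sH af hk.
  have HT : H = setT.
    move: hk; rewrite leqn0 => /eqP/cards0_eq e.
    by rewrite -(setCK H) e setC0.
  by exists f; split => //; rewrite -HT.
case: (boolP (H == setT)) => [/eqP HT | nT].
  by exists f; split => //; rewrite -HT.
have : ~: H != set0 by apply: contra nT => /eqP e; rewrite -(setCK H) e setC0.
case/set0Pn => g; rewrite inE => gH.
have [t ht] := exists_t H sH f g.
have sH' := subgrpH' H sH g.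
have af' := addon_f' H sH f af g gH t ht.
have hk' : (#|~: H' H sH g| <= k)%N.
  rewrite -ltnS; apply: leq_trans hk; apply: proper_card.
  apply/properP; split.
    by apply/subsetP => x; rewrite !in_setC; apply: contra; apply: HsubH'.
  by exists g; rewrite !in_setC ?gH // negbK gH'.
have [f2 [a2 e2]] := IH _ _ sH' af' hk'.
exists f2; split => // x hx.
by rewrite e2 ?HsubH' // f'_agree.
Qed.

Lemma separate (T : {set G}) (w : G) : subgrp T -> w \notin T ->
  exists chi : G -> qz, addon setT chi /\ (forall x, x \in T -> chi x = 0) /\ chi w != 0.
Proof.
move=> sT wT.
have a0 : addon T (fun _ => 0) by move=> x y _ _; rewrite addr0.
have [t [ht tn]] := exists_t_sep T sT (fun _ => 0) w wT (fun _ _ => erefl).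
have [f2 [a2 e2]] := extend_all _ _ (subgrpH' T sT w) (addon_f' T sT _ a0 w wT t ht).
exists f2; split => //; split.
  by move=> x hx; rewrite e2 ?HsubH' // f'_agree.
by rewrite e2 ?gH' // f'g.
Qed.

End Ext.
Arguments subgrp {G}.
Arguments addon {G}.
Arguments separate {G} T w.

Module CodesM.
Set Implicit Arguments. Unset Strict Implicit.


Section Codes.
Variables (R : finNzRingType) (V : finLmodType R).
Definition W (K : nat) := {ffun 'I_K -> V}.
HB.instance Definition _ K := Finite.on (W K).
HB.instance Definition _ K := GRing.Lmodule.on (W K).

Variables (b : V -> V -> qz) (Phi : {ffun V -> qz} -> Prop).
Hypothesis fr : form_ring b Phi.

Definition Bk K (x y : {ffun 'I_K -> V}) : qz := \sum_(i < K) b (x i) (y i).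

Lemma bad : biadditive b.
Proof. by case: fr => [[]]. Qed.

Lemma b0r v : b v 0 = 0.
Proof.
have := (proj2 bad) v 0 0; rewrite addr0 => e.
by have := congr1 (fun z => z - b v 0) e; rewrite addrK subrr.
Qed.

Lemma b0l v : b 0 v = 0.
Proof.
have := (proj1 bad) 0 0 v; rewrite addr0 => e.
by have := congr1 (fun z => z - b 0 v) e; rewrite addrK subrr.
Qed.

Lemma b_sym : exists s : R, forall v w, b w v = b v (s *: w).
Proof.
case: fr => [[_ _ tau _] _ _ _]; have [s hs] := tau 1.
by exists s => v w; have := hs v w; rewrite /bil_tau /bil_r scale1r.
Qed.

Definition delta K (i : 'I_K) (v : V) : W K := [ffun j => if j == i then v else 0].

Lemma dual_rep K (chi : W K -> qz) : addon [set: W K] chi ->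
  exists u : W K, forall y, chi y = Bk u y.
Proof.
move=> ac.
have chiD x y : chi (x + y) = chi x + chi y by apply: ac; rewrite inE.
have chi0 : chi 0 = 0.
  have := chiD 0 0; rewrite addr0 => e.
  by have := congr1 (fun z => z - chi 0) e; rewrite addrK subrr.
have ex i : exists v : V, forall w, chi (delta i w) = b v w.
  case: fr => [[_ [_ ns] _ _] _ _ _]; apply: ns => v w.
  rewrite -chiD; congr chi; apply/ffunP => j; rewrite !ffunE.
  by case: (j == i); rewrite ?addr0.
have [u hu] := fin_all_exists ex.
exists [ffun i => u i] => y.
have ey : y = \sum_(i < K) delta i (y i).
  apply/ffunP => j; rewrite sum_ffunE (bigD1 j) //= !ffunE eqxx big1 ?addr0 //.
  by move=> i ij; rewrite ffunE eq_sym (negPf ij).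
rewrite {1}ey (big_morph chi chiD chi0) /Bk.
by apply: eq_bigr => i _; rewrite hu ffunE.
Qed.

Lemma perp_sep K (T : {set W K}) (w : W K) : subgrp T -> w \notin T ->
  exists u : W K, (forall t, t \in T -> Bk u t = 0) /\ Bk u w != 0.
Proof.
move=> sT wT; have [chi [ac [c0 cw]]] := separate _ _ sT wT.
have [u hu] := dual_rep ac.
exists u; split => [t ht|]; first by rewrite -hu c0.
by rewrite -hu.
Qed.


Lemma codeB N (C : {set {ffun 'I_N -> V}}) x y : is_code C -> x \in C -> y \in C -> x - y \in C.
Proof. by case=> _ h hx hy; have := h (-1) y x hy hx; rewrite scaleN1r addrC. Qed.

Lemma codeZ N (C : {set {ffun 'I_N -> V}}) r x : is_code C -> x \in C -> r *: x \in C.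
Proof. by case=> h0 h hx; have := h r x 0 hx h0; rewrite addr0. Qed.

Lemma code0 N (C : {set {ffun 'I_N -> V}}) : is_code C -> 0 \in C.
Proof. by case. Qed.

Section Glue.
Variables p n : nat.
Definition glue (a : {ffun 'I_p -> V}) (d : {ffun 'I_n -> V}) : {ffun 'I_(p + n) -> V} :=
  [ffun k => match split k with inl i => a i | inr j => d j end].

Lemma glue_l a d i : glue a d (lshift n i) = a i.
Proof. by rewrite ffunE -[lshift n i]/(unsplit (inl i)) unsplitK. Qed.
Lemma glue_r a d j : glue a d (rshift p j) = d j.
Proof. by rewrite ffunE -[rshift p j]/(unsplit (inr j)) unsplitK. Qed.

Lemma Bk_glue a d a' d' : Bk (glue a d) (glue a' d') = Bk a a' + Bk d d'.
Proof.
rewrite /Bk big_split_ord /=; congr (_ + _); apply: eq_bigr => i _.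
  by rewrite !glue_l.
by rewrite !glue_r.
Qed.

Lemma glue_lin r a d a' d' : glue (r *: a + a') (r *: d + d') = r *: glue a d + glue a' d'.
Proof. by apply/ffunP => k; rewrite !ffunE; case: (split k) => i; rewrite !ffunE. Qed.

Lemma glue_sub a d a' d' : glue (a - a') (d - d') = glue a d - glue a' d'.
Proof. by apply/ffunP => k; rewrite !ffunE; case: (split k) => i; rewrite !ffunE. Qed.

Lemma glue0 : glue 0 0 = 0.
Proof. by apply/ffunP => k; rewrite !ffunE; case: (split k) => i; rewrite !ffunE. Qed.

Lemma glue_split (u : {ffun 'I_(p + n) -> V}) :
  u = glue [ffun i => u (lshift n i)] [ffun j => u (rshift p j)].
Proof.
apply/ffunP => k; rewrite ffunE -[k in u k](splitK k).
by case: (split k) => i; rewrite ffunE.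
Qed.

Lemma sum_split (phi : V -> qz) a d :
  \sum_(k < p + n) phi (glue a d k) = \sum_(i < p) phi (a i) + \sum_(j < n) phi (d j).
Proof.
rewrite big_split_ord; congr (_ + _); apply: eq_bigr => i _.
  by rewrite glue_l.
by rewrite glue_r.
Qed.

End Glue.

Lemma Bk0r K (x : {ffun 'I_K -> V}) : Bk x 0 = 0.
Proof. by rewrite /Bk big1 // => i _; rewrite ffunE b0r. Qed.

Lemma Bk0l K (x : {ffun 'I_K -> V}) : Bk 0 x = 0.
Proof. by rewrite /Bk big1 // => i _; rewrite ffunE b0l. Qed.

Lemma cancel_len p n : type_length b Phi (p + n) -> type_length b Phi n -> (0 < p)%N ->
  type_length b Phi p.
Proof.
move=> [_ [L [cL sdL0 isoL]]] [_ [D [cD sdD0 isoD]]] p0.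
have sdL : forall x, x \in L <-> (forall c, c \in L -> Bk x c = 0) := sdL0.
have sdD : forall x, x \in D <-> (forall c, c \in D -> Bk x c = 0) := sdD0.
split => //.
pose LX := [set a : {ffun 'I_p -> V} | [exists d in D, glue a d \in L]].
have LXP a : reflect (exists2 d, d \in D & glue a d \in L) (a \in LX).
  rewrite inE; apply: (iffP existsP) => [[d /andP[h1 h2]]|[d h1 h2]].
    by exists d.
  by exists d; rewrite h1.
have cLX : is_code LX.
  split.
    by apply/LXP; exists 0; [exact: code0 | rewrite glue0; exact: code0].
  move=> r x y /LXP[dx hdx hx] /LXP[dy hdy hy]; apply/LXP.
  exists (r *: dx + dy); first by case: cD => _ h; apply: h.
  by rewrite glue_lin; case: cL => _ h; apply: h.
exists LX; split => //; last first.
  move=> a /LXP[d hd ha] phi hphi.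
  have := isoL _ ha _ hphi; rewrite sum_split (isoD _ hd _ hphi) addr0.
  by [].
have [s hs] := b_sym.
move=> x; change (x \in LX <-> (forall c, c \in LX -> Bk x c = 0)); split.
  move=> /LXP[d hd hx] c /LXP[d' hd' hc].
  have := (proj1 (sdL _) hx) _ hc; rewrite Bk_glue.
  by rewrite ((proj1 (sdD _) hd) _ hd') addr0.
move=> hx0.
have hx : forall c, c \in LX -> Bk x c = 0 := hx0.
pose T : {set W (p + n)} := [set y : W (p + n) | [exists d in D, (y : {ffun 'I_(p + n) -> V}) - glue 0 d \in L]].
have TP y : reflect (exists2 d, d \in D & (y : {ffun 'I_(p + n) -> V}) - glue 0 d \in L) (y \in T).
  rewrite inE; apply: (iffP existsP) => [[d /andP[h1 h2]]|[d h1 h2]].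
    by exists d.
  by exists d; rewrite h1.
have sT : subgrp T.
  split.
    by apply/TP; exists 0; [exact: code0 | rewrite glue0 subrr; exact: code0].
  move=> y1 y2 /TP[d1 hd1 h1] /TP[d2 hd2 h2]; apply/TP.
  exists (d1 - d2); first exact: codeB.
  have -> : (y1 - y2 : {ffun 'I_(p + n) -> V}) - glue 0 (d1 - d2) =
            ((y1 : {ffun 'I_(p + n) -> V}) - glue 0 d1) - ((y2 : {ffun 'I_(p + n) -> V}) - glue 0 d2).
    have e := glue_sub (0 : {ffun 'I_p -> V}) d1 0 d2; rewrite subr0 in e; rewrite e.
    by rewrite !opprB addrACA [RHS]addrACA [- glue _ _ - _]addrC.
  exact: codeB.
case: (boolP ((glue x 0 : W (p + n)) \in T)) => [/TP[d hd hg] | ngT].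
  apply/LXP; exists (- d); first by rewrite -scaleN1r; exact: codeZ.
  by rewrite -[- d]add0r -[x]subr0 glue_sub.
exfalso.
have [u [uT uw]] := perp_sep sT ngT.
have uL : (u : {ffun 'I_(p + n) -> V}) \in L.
  apply/(sdL _) => c hc; apply: uT; apply/TP; exists 0; first exact: code0.
  by rewrite glue0 subr0.
set ul := [ffun i => (u : {ffun 'I_(p + n) -> V}) (lshift n i)].
set ur := [ffun j => (u : {ffun 'I_(p + n) -> V}) (rshift p j)].
have eu : (u : {ffun 'I_(p + n) -> V}) = glue ul ur by exact: glue_split.
have urD : ur \in D.
  apply/(sdD _) => d hd.
  have := uT (glue 0 d : W (p + n)) _.
  rewrite eu Bk_glue Bk0r add0r => -> //.
  by apply/TP; exists d => //; rewrite subrr; exact: code0.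
have ulX : ul \in LX by apply/LXP; exists ur => //; rewrite -eu.
move: uw; rewrite eu Bk_glue Bk0r addr0.
have -> : Bk ul x = Bk x (s *: ul).
  by rewrite /Bk; apply: eq_bigr => i _; rewrite (hs (x i) (ul i)) !ffunE.
by rewrite (hx _ (codeZ s cLX ulX)) eqxx.
Qed.

End Codes.

End CodesM.
Import CodesM.

Theorem mainTheorem3 (R : finNzRingType) (V : finLmodType R)
    (b : V -> V -> qz) (Phi : {ffun V -> qz} -> Prop) :
  form_ring b Phi ->
  (exists N : nat, type_length b Phi N) ->
  exists n : nat, is_min_of (type_length b Phi) n /\ is_gcd_of (type_length b Phi) n.
Proof.
move=> fr [N0 hN0].
set S := type_length b Phi.
have hmin : forall k m, (m <= k)%N -> S m -> exists n, S n /\ forall m', S m' -> (n <= m')%N.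
  elim=> [|k IH] m hm Sm.
    exists m; split => // m' _; move: hm; rewrite leqn0 => /eqP ->; exact: leq0n.
  case: (classic (exists m', (m' < m)%N /\ S m')) => [[m' [lt Sm']]|nex].
    by apply: (IH m') => //; rewrite -ltnS (leq_trans lt hm).
  exists m; split => // m' Sm'; rewrite leqNgt; apply/negP => lt.
  by apply: nex; exists m'.
have [n [Sn nmin]] := hmin N0 N0 (leqnn _) hN0.
exists n; split; first by split.
have hdiv : forall k m, (m <= k)%N -> S m -> (n %| m)%N.
  elim=> [|k IH] m hm Sm.
    by move: hm; rewrite leqn0 => /eqP ->; exact: dvdn0.
  have nm := nmin _ Sm.
  case: (ltngtP n m) => [lt||->]; last by rewrite dvdnn.
    have S' : S (m - n)%N.
      apply: (cancel_len fr (n := n)) => //; last by rewrite subn_gt0.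
      by rewrite subnK // ltnW.
    have := IH (m - n)%N _ S'.
    have n0 : (0 < n)%N by case: Sn.
    have hk : (m - n <= k)%N by lia.
    move=> /(_ hk) h; have -> : m = (m - n + n)%N by rewrite subnK // ltnW.
    by rewrite dvdn_add // dvdnn.
  by rewrite ltnNge nm.
split; first by move=> m Sm; exact: (hdiv m).
by move=> e he; apply: he.
Qed.
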